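(* Let $\ell\ge1$, $N=2^\ell$, let ${\mathbf x}_0,\dots,{\mathbf x}_{\omega-1}\in\mathbb{F}_2^\ell$ be distinct, and let $D=P_{{\mathbf x}_0}+\cdots+P_{{\mathbf x}_{\omega-1}}$ (the dyadic matrix whose signature has support $\{{\mathbf x}_0,\dots,{\mathbf x}_{\omega-1}\}$). Let $R$ be the number of ordered pairs $\big((u,v),(u',v')\big)$ with $u,v,u',v'\in\{0,\dots,\omega-1\}$, $u\ne v$, $u'\ne v'$, $u\ne u'$, $v\ne v'$ and ${\mathbf x}_u+{\mathbf x}_v={\mathbf x}_{u'}+{\mathbf x}_{v'}$; write $R=R^{c}+R^{nc}$, where $R^{c}$ counts those pairs with $u=v'$ and $v=u'$, and $R^{nc}$ the remaining ones. Then the number of $4$-cycles in the Tanner graph of $D$ is $$\mathcal{N}_4=\frac{2^\ell}{4}\left(R^{c}+R^{nc}\right).$$ In particular, if $\omega\ge2$ the Tanner graph of $D$ has girth $4$.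
   Context: Rows and columns of $N\times N$ binary matrices are indexed by $\mathbb{F}_2^\ell$ via ${\mathbf x}=(x_1,\dots,x_\ell)\leftrightarrow 1+\sum_i x_i2^{i-1}$. For ${\mathbf a}\in\mathbb{F}_2^\ell$, $P_{\mathbf a}$ is the $N\times N$ binary matrix with $(P_{\mathbf a})_{{\mathbf x},{\mathbf y}}=1$ iff ${\mathbf y}={\mathbf x}+{\mathbf a}$ (the dyadic permutation matrix with signature the indicator vector of ${\mathbf a}$). The Tanner graph of a binary matrix $H$ is the bipartite graph with one check node per row, one variable node per column, and an edge between row $r$ and column $c$ iff $H_{r,c}=1$. A $k$-cycle is a closed walk with $k$ edges and distinct vertices and edges; the girth is the length of a shortest cycle. *)

(* Defs.v *)
From mathcomp Require Import all_boot all_order all_algebra.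
Set Implicit Arguments. Unset Strict Implicit. Unset Printing Implicit Defensive.
Import GRing.Theory.
Local Open Scope ring_scope.

(* Binary matrices with rows/columns indexed by F_2^l = 'rV['F_2]_l
   (the integer labelling x <-> 1 + sum x_i 2^(i-1) is a mere relabelling). *)

Definition dyadicP (l : nat) (a : 'rV['F_2]_l) (x y : 'rV['F_2]_l) : 'F_2 :=
  (y == x + a)%:R.

Definition dyadicD (l w : nat) (xs : 'I_w -> 'rV['F_2]_l)
  (x y : 'rV['F_2]_l) : 'F_2 := \sum_(u < w) dyadicP (xs u) x y.

(* Tanner graph of a binary matrix H : rows (inl = check nodes),
   columns (inr = variable nodes); edge r -- c iff H r c = 1. *)
Definition tanner_adj (T : finType) (H : T -> T -> 'F_2) : rel (T + T) :=
  fun a b => match a, b with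
             | inl r, inr c => H r c != 0
             | inr c, inl r => H r c != 0
             | _, _ => false
             end.

Definition is_kcycle (V : finType) (e : rel V) (k : nat) (p : {ffun 'I_k -> V}) : bool :=
  [&& (0 < k)%N,
      injectiveb (fun i => p i),
      [forall i : 'I_k, e (p i) (p (ordS i))] &
      injectiveb (fun i : 'I_k => [set p i; p (ordS i)])].

Definition cycle_edges (V : finType) (k : nat) (p : {ffun 'I_k -> V}) : {set {set V}} :=
  [set [set p i; p (ordS i)] | i : 'I_k].

(* Number of k-cycles (counted as subgraphs, i.e. by their edge sets) *)
Definition num_cycles (V : finType) (e : rel V) (k : nat) : nat :=
  #|[set cycle_edges p | p in [pred p : {ffun 'I_k -> V} | is_kcycle e p]]|.

Definition girth_is (V : finType) (e : rel V) (g : nat) : Prop :=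
  (exists p : {ffun 'I_g -> V}, is_kcycle e p) /\
  (forall k, (k < g)%N -> forall p : {ffun 'I_k -> V}, ~~ is_kcycle e p).

Definition Rset (l w : nat) (xs : 'I_w -> 'rV['F_2]_l) :
  {set ('I_w * 'I_w) * ('I_w * 'I_w)} :=
  [set q | [&& q.1.1 != q.1.2, q.2.1 != q.2.2, q.1.1 != q.2.1, q.1.2 != q.2.2 &
             xs q.1.1 + xs q.1.2 == xs q.2.1 + xs q.2.2]].

Definition Rcset (l w : nat) (xs : 'I_w -> 'rV['F_2]_l) :=
  [set q in Rset xs | (q.1.1 == q.2.2) && (q.1.2 == q.2.1)].

Definition Rncset (l w : nat) (xs : 'I_w -> 'rV['F_2]_l) :=
  Rset xs :\: Rcset xs.

(* Main.v *)
Require Import Defs.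
From mathcomp Require Import all_boot all_order all_algebra.
From mathcomp Require Import ring.
Import GRing.Theory.
Set Implicit Arguments. Unset Strict Implicit.
Definition cadj (a b : 'I_4) := (b == ordS a) || (a == ordS b).
Definition g (r i : nat) : 'I_4 :=
  Ordinal (@ltn_pmod (if (r < 4)%N then (i + r) else (r + 4 - i))%N 4 isT).
Lemma g_adj : forall (r : 'I_8) (i : 'I_4), cadj (g r i) (g r (ordS i)).
Proof. by do 2! case=> [[|[|[|[|[|[|[|[|?]]]]]]]] ?]. Qed.
Lemma g_injb : forall (r : 'I_8) (i j : 'I_4), (g r i == g r j) ==> (i == j).
Proof. by do 3! case=> [[|[|[|[|[|[|[|[|?]]]]]]]] ?]. Qed.
Lemma g_inj2b : forall (r r' : 'I_8), [&& g r 0 == g r' 0 & g r 1 == g r' 1] ==> (r == r').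
Proof. by do 2! case=> [[|[|[|[|[|[|[|[|?]]]]]]]] ?]. Qed.
Lemma brute : forall a b c d : 'I_4, cadj a b -> cadj b c -> cadj c d -> cadj d a -> a != c -> b != d ->
  has (fun r => [&& g r 0 == a, g r 1 == b, g r 2 == c & g r 3 == d]) (iota 0 8).
Proof. by do 4! case=> [[|[|[|[|?]]]] ?]. Qed.
Lemma ordSS_neq : forall i : 'I_4, i != ordS (ordS i).
Proof. by case=> [[|[|[|[|?]]]] ?]. Qed.

Definition o0 : 'I_4 := Ordinal (isT : 0 < 4)%N.
Definition o1 : 'I_4 := Ordinal (isT : 1 < 4)%N.
Definition o2 : 'I_4 := Ordinal (isT : 2 < 4)%N.
Definition o3 : 'I_4 := Ordinal (isT : 3 < 4)%N.
Lemma ordS0 : ordS o0 = o1. Proof. exact: val_inj. Qed.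
Lemma ordS1 : ordS o1 = o2. Proof. exact: val_inj. Qed.
Lemma ordS2 : ordS o2 = o3. Proof. exact: val_inj. Qed.
Lemma ordS3 : ordS o3 = o0. Proof. exact: val_inj. Qed.
Lemma ord4_cases (P : 'I_4 -> Prop) : P o0 -> P o1 -> P o2 -> P o3 -> forall i, P i.
Proof.
move=> h0 h1 h2 h3; case=> [[|[|[|[|//]]]] Hi].
- by have -> : Ordinal Hi = o0 by exact: val_inj.
- by have -> : Ordinal Hi = o1 by exact: val_inj.
- by have -> : Ordinal Hi = o2 by exact: val_inj.
- by have -> : Ordinal Hi = o3 by exact: val_inj.
Qed.

Lemma set2_eq (V : finType) (a b c d : V) :
  [set a; b] = [set c; d] -> (a = c /\ b = d) \/ (a = d /\ b = c).
Proof.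
move=> E.
have ha : a \in [set c; d] by rewrite -E !inE eqxx.
have hb : b \in [set c; d] by rewrite -E !inE eqxx orbT.
have hc : c \in [set a; b] by rewrite E !inE eqxx.
have hd : d \in [set a; b] by rewrite E !inE eqxx orbT.
move: ha hb hc hd; rewrite !inE.
case/orP=> /eqP ha; case/orP=> /eqP hb; case/orP=> /eqP hc; case/orP=> /eqP hd;
  subst; auto.
Qed.

Lemma edge_inj4 (V : finType) (p : {ffun 'I_4 -> V}) : injective p ->
  injective (fun i : 'I_4 => [set p i; p (ordS i)]).
Proof.
move=> ip i j /set2_eq [[/ip -> _]|[/ip h1 /ip h2]] //.
have := ordSS_neq i. by rewrite h2 -h1 eqxx.
Qed.

Lemma kcycle4E (V : finType) (e : rel V) (p : {ffun 'I_4 -> V}) :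
  is_kcycle e p = injectiveb (fun i => p i) && [forall i, e (p i) (p (ordS i))].
Proof.
rewrite /is_kcycle /=.
case: (injectiveP (fun i => p i)) => //= ip.
have -> : injectiveb (fun i : 'I_4 => [set p i; p (ordS i)]) by apply/injectiveP; apply: edge_inj4.
by rewrite andbT.
Qed.

Definition W (V : finType) (e : rel V) := [set p : {ffun 'I_4 -> V} | is_kcycle e p].

Lemma card_edges (V : finType) (p : {ffun 'I_4 -> V}) : injective p -> #|cycle_edges p| = 4.
Proof. by move=> ip; rewrite /cycle_edges card_imset ?card_ord //; apply: edge_inj4. Qed.

Lemma fiber (V : finType) (e : rel V) (esym : symmetric e) (p : {ffun 'I_4 -> V}) : p \in W e ->
  [set q in W e | cycle_edges q == cycle_edges p] = [set [ffun i : 'I_4 => p (g r i)] | r : 'I_8].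
Proof.
rewrite inE kcycle4E => /andP[/injectiveP ip /forallP ep].
apply/setP=> q; apply/idP/idP.
- rewrite !inE kcycle4E => /andP[/andP[/injectiveP iq /forallP eq] /eqP Eq].
  have hq : forall i, exists j, q i = p j.
    move=> i.
    have : [set q i; q (ordS i)] \in cycle_edges p.
      by rewrite -Eq; apply/imsetP; exists i.
    case/imsetP=> j _ /set2_eq [[-> _]|[-> _]]; by eexists.
  have [s hs] := fin_all_exists hq.
  have sa : forall i, cadj (s i) (s (ordS i)).
    move=> i.
    have : [set q i; q (ordS i)] \in cycle_edges p.
      by rewrite -Eq; apply/imsetP; exists i.
    case/imsetP=> j _; rewrite !hs => /set2_eq [[/ip -> /ip ->]|[/ip -> /ip ->]];
      by rewrite /cadj eqxx ?orbT.
  have si : injective s by move=> i j h; apply: iq; rewrite !hs h.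
  have sa0 := sa o0; have sa1 := sa o1; have sa2 := sa o2; have sa3 := sa o3.
  rewrite ?ordS0 ?ordS1 ?ordS2 ?ordS3 in sa0 sa1 sa2 sa3.
  have := brute sa0 sa1 sa2 sa3.
  have n02 : s o0 != s o2 by apply/eqP => /si.
  have n13 : s o1 != s o3 by apply/eqP => /si.
  move=> /(_ n02 n13) /hasP [r]; rewrite mem_iota add0n => /andP[_ r8].
  case/and4P=> /eqP h0 /eqP h1 /eqP h2 /eqP h3.
  apply/imsetP; exists (Ordinal r8) => //.
  apply/ffunP; apply: ord4_cases; rewrite ffunE hs /=.
  - by rewrite -h0.
  - by rewrite -h1.
  - by rewrite -h2.
  - by rewrite -h3.
- case/imsetP=> r _ ->.
  have sa := g_adj r.
  have si : injective (fun i : 'I_4 => g r i) by move=> i j h; have := g_injb r i j; rewrite h eqxx => /eqP.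
  have iq : injective [ffun i : 'I_4 => p (g r i)].
    by move=> i j; rewrite !ffunE => /ip /si.
  have sub : cycle_edges [ffun i : 'I_4 => p (g r i)] \subset cycle_edges p.
    apply/subsetP=> E /imsetP[i _ ->]; rewrite !ffunE.
    case/orP: (sa i) => /eqP ->; apply/imsetP.
      by exists (g r i).
    by exists (g r (ordS i)) => //; rewrite setUC.
  rewrite !inE kcycle4E; apply/andP; split; last first.
    by rewrite eqEcard sub !card_edges.
  apply/andP; split; first by apply/injectiveP.
  apply/forallP=> i; rewrite !ffunE.
  case/orP: (sa i) => /eqP ->; first exact: ep.
  by rewrite esym; apply: ep.
Qed.

Lemma card_fiber (V : finType) (e : rel V) (esym : symmetric e) (p : {ffun 'I_4 -> V}) : p \in W e ->
  #|[set q in W e | cycle_edges q == cycle_edges p]| = 8.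
Proof.
move=> pW; rewrite (fiber esym pW) card_imset ?card_ord //.
move: pW; rewrite inE kcycle4E => /andP[/injectiveP ip _].
move=> r t /ffunP h; apply/eqP; apply: (implyP (g_inj2b r t)).
apply/andP; split; apply/eqP; apply: ip.
  by have := h o0; rewrite !ffunE.
by have := h o1; rewrite !ffunE.
Qed.

Lemma cardW (V : finType) (e : rel V) (esym : symmetric e) :
  #|W e| = (8 * num_cycles e 4)%N.
Proof.
rewrite /num_cycles -sum1_card.
rewrite (eq_bigl (fun p => p \in [pred p : {ffun 'I_4 -> V} | is_kcycle e p])); last first.
  by move=> p; rewrite !inE.
rewrite (partition_big_imset (@cycle_edges V 4)) /=.
rewrite mulnC -sum_nat_const; apply: eq_bigr => E /imsetP[p pW ->].
have pW' : p \in W e by rewrite inE.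
rewrite -(card_fiber esym pW') -sum1_card; apply: eq_bigl => q.
by rewrite !inE.
Qed.
Local Open Scope ring_scope.
Lemma addrr2 (l : nat) (a : 'rV['F_2]_l) : a + a = 0.
Proof.
have h2 : (2%:R : 'F_2) = 0 by apply: pchar_Fp_0.
by rewrite -mulr2n -scaler_nat h2 scale0r.
Qed.

Lemma addrKK (l : nat) (x a : 'rV['F_2]_l) : x + a + a = x.
Proof. by rewrite -addrA addrr2 addr0. Qed.

Lemma eq_sw (l : nat) (x y a : 'rV['F_2]_l) : y = x + a -> x = y + a.
Proof. by move=> ->; rewrite addrKK. Qed.

Lemma adjP (l w : nat) (xs : 'I_w -> 'rV['F_2]_l) (ixs : injective xs) x y :
  reflect (exists u, y = x + xs u) (dyadicD xs x y != 0).
Proof.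
rewrite /dyadicD /dyadicP.
apply: (iffP idP).
  move=> H; case: (pickP (fun u => y == x + xs u)) => [u /eqP hu | Hn]; first by exists u.
  by move: H; rewrite big1 ?eqxx // => u _; rewrite Hn.
case=> u0 ->; rewrite (bigD1 u0) //= eqxx big1 ?addr0 ?oner_eq0 //.
move=> u /negbTE nu; case: eqP => // /addrI /ixs E.
by rewrite E eqxx in nu.
Qed.

Lemma selfadd (l : nat) (x y : 'rV['F_2]_l) : x = x + y -> y = 0.
Proof. by move=> h; apply: (@addrI _ x); rewrite addr0 -h. Qed.
Lemma sum0 (l : nat) (a b : 'rV['F_2]_l) : a + b = 0 -> a = b.
Proof. by move=> h; rewrite -(addrKK a b) h add0r. Qed.

Definition isl (A B : Type) (s : A + B) : bool := if s is inl _ then true else false.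

Definition phi (l w : nat) (xs : 'I_w -> 'rV['F_2]_l) (x : 'rV['F_2]_l)
  (q : ('I_w * 'I_w) * ('I_w * 'I_w)) : {ffun 'I_4 -> 'rV['F_2]_l + 'rV['F_2]_l} :=
  [ffun i : 'I_4 => match val i with
     | 0 => inl x
     | 1 => inr (x + xs q.1.1)
     | 2 => inl (x + xs q.1.1 + xs q.1.2)
     | _ => inr (x + xs q.1.1 + xs q.1.2 + xs q.2.2) end].

Lemma tsym (l w : nat) (xs : 'I_w -> 'rV['F_2]_l) : symmetric (tanner_adj (dyadicD xs)).
Proof. by case=> a; case=> b. Qed.

Lemma o_neq : [/\ o0 != o2, o1 != o3, o2 != o0 & o3 != o1]. Proof. by []. Qed.

Lemma phi_in (l w : nat) (xs : 'I_w -> 'rV['F_2]_l) (ixs : injective xs) x q :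
  q \in Rset xs -> phi xs x q \in W (tanner_adj (dyadicD xs)).
Proof.
case: q => [[u v] [u' v']].
rewrite inE /= => /and5P[nuv nuv' nuu' nvv' /eqP hrel].
rewrite inE kcycle4E; apply/andP; split.
  apply/injectiveP; apply: ord4_cases; apply: ord4_cases; rewrite !ffunE //=.
  - move=> [h]; move: h; rewrite -addrA => /selfadd /sum0 /ixs /eqP.
    by rewrite (negbTE nuv).
  - move=> [h]; move: h; rewrite -addrA => /selfadd /sum0 /ixs /eqP.
    by rewrite (negbTE nvv').
  - move=> [h]; move: h => /esym; rewrite -addrA => /selfadd /sum0 /ixs /eqP.
    by rewrite (negbTE nuv).
  - move=> [h]; move: h => /esym; rewrite -addrA => /selfadd /sum0 /ixs /eqP.
    by rewrite (negbTE nvv').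
apply/forallP; apply: ord4_cases; rewrite ?ordS0 ?ordS1 ?ordS2 ?ordS3 !ffunE /=.
- by apply/adjP => //; exists u.
- by apply/adjP => //; exists v; rewrite addrKK.
- by apply/adjP => //; exists v'.
- apply/adjP => //; exists u'.
  by rewrite -(addrA x (xs u)) hrel addrA addrKK.
Qed.

Definition Lset (l : nat) := [set p : {ffun 'I_4 -> 'rV['F_2]_l + 'rV['F_2]_l} | isl (p o0)].

Lemma o_ne (i j : 'I_4) : val i != val j -> i <> j.
Proof. by move=> h e; rewrite e eqxx in h. Qed.

Lemma Wcheck_eq (l w : nat) (xs : 'I_w -> 'rV['F_2]_l) (ixs : injective xs) :
  W (tanner_adj (dyadicD xs)) :&: Lset l
  = [set phi xs z.1 z.2 | z in setX [set: 'rV['F_2]_l] (Rset xs)].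
Proof.
apply/setP=> p; apply/idP/idP; last first.
  case/imsetP=> [[x q]]; rewrite inE /= => /andP[_ hq] ->.
  by rewrite inE phi_in // inE ffunE.
rewrite !inE => /andP[pW].
have pW' := pW; move: pW; rewrite kcycle4E => /andP[/injectiveP ip /forallP ep].
have e0 := ep o0; have e1 := ep o1; have e2 := ep o2; have e3 := ep o3.
rewrite ?ordS0 ?ordS1 ?ordS2 ?ordS3 in e0 e1 e2 e3.
case E0: (p o0) => [x|//] _.
case E1: (p o1) => [y1|y1]; rewrite E0 E1 // in e0.
case E2: (p o2) => [x2|x2]; rewrite E1 E2 // in e1.
case E3: (p o3) => [y2|y2]; rewrite E2 E3 // in e2.
rewrite E3 E0 /= in e3.
move: e0 e1 e2 e3 => /= /adjP-/(_ ixs) [u hu] /adjP-/(_ ixs) [v hv]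
  /adjP-/(_ ixs) [v' hv'] /adjP-/(_ ixs) [u' hu'].
move/eq_sw: hv => hv; subst y1 x2 y2.
have hrel : xs u + xs v = xs u' + xs v'.
  apply: (@addrI _ x); rewrite !addrA; apply: eq_sw; by rewrite -hu'.
apply/imsetP; exists (x, ((u, v), (u', v'))); last first.
  by apply/ffunP; apply: ord4_cases; rewrite ffunE /=.
rewrite !inE /=; apply/and5P; split; last by apply/eqP.
- apply/eqP => e; subst v.
  by apply: (@o_ne o0 o2) => //; apply: ip; rewrite E0 E2 addrKK.
- apply/eqP => e; subst v'.
  apply: (@o_ne o0 o2) => //; apply: ip; rewrite E0 E2.
  by congr inl; apply: (@addIr _ (xs u')); rewrite hu'.
- apply/eqP => e; subst u'.
  by apply: (@o_ne o1 o3) => //; apply: ip; rewrite E1 E3 hu'.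
- apply/eqP => e; subst v'.
  by apply: (@o_ne o1 o3) => //; apply: ip; rewrite E1 E3 addrKK.
Qed.

Lemma card_Wcheck (l w : nat) (xs : 'I_w -> 'rV['F_2]_l) (ixs : injective xs) :
  #|W (tanner_adj (dyadicD xs)) :&: Lset l| = (2 ^ l * #|Rset xs|)%N.
Proof.
rewrite Wcheck_eq // card_in_imset; last first.
  case=> [x [[u v] [u' v']]] [x' [[a b] [a' b']]].
  move=> /setXP[_ h1] /setXP[_ h2] /ffunP E.
  move: h1 h2; rewrite !inE /= => /and5P[_ _ _ _ /eqP h] /and5P[_ _ _ _ /eqP h'].
  have := E o0; rewrite !ffunE /= => -[ex]; subst x'.
  have := E o1; rewrite !ffunE /= => -[/addrI /ixs eu]; subst a.
  have := E o2; rewrite !ffunE /= => -[/addrI /ixs ev]; subst b.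
  have := E o3; rewrite !ffunE /= => -[/addrI /ixs ev']; subst b'.
  have : xs u' = xs a'.
    by rewrite (eq_sw h) (eq_sw h').
  by move/ixs ->.
rewrite cardsX cardsT card_mx card_Fp //= mul1n.
by [].
Qed.

Definition sw (A : Type) (s : A + A) : A + A :=
  match s with inl a => inr a | inr a => inl a end.
Lemma swK (A : Type) : involutive (@sw A). Proof. by case. Qed.

Definition swf (l : nat) (p : {ffun 'I_4 -> 'rV['F_2]_l + 'rV['F_2]_l}) :
  {ffun 'I_4 -> 'rV['F_2]_l + 'rV['F_2]_l} := [ffun i => sw (p i)].
Lemma swfK (l : nat) : involutive (@swf l).
Proof. by move=> p; apply/ffunP=> i; rewrite !ffunE swK. Qed.

Lemma Dsym (l w : nat) (xs : 'I_w -> 'rV['F_2]_l) x y : dyadicD xs x y = dyadicD xs y x.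
Proof.
rewrite /dyadicD; apply: eq_bigr => u _; rewrite /dyadicP.
suff -> : (y == x + xs u) = (x == y + xs u) by [].
by apply/eqP/eqP => /eq_sw.
Qed.

Lemma tadj_sw (l w : nat) (xs : 'I_w -> 'rV['F_2]_l) a b :
  tanner_adj (dyadicD xs) (sw a) (sw b) = tanner_adj (dyadicD xs) a b.
Proof. by case: a => a; case: b => b //=; rewrite Dsym. Qed.

Lemma swf_W (l w : nat) (xs : 'I_w -> 'rV['F_2]_l) p :
  p \in W (tanner_adj (dyadicD xs)) -> swf p \in W (tanner_adj (dyadicD xs)).
Proof.
rewrite !inE !kcycle4E => /andP[/injectiveP ip /forallP ep]; apply/andP; split.
  by apply/injectiveP => i j; rewrite !ffunE => /(can_inj (@swK _)) /ip.
by apply/forallP=> i; rewrite !ffunE tadj_sw.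
Qed.

Lemma card_W (l w : nat) (xs : 'I_w -> 'rV['F_2]_l) (ixs : injective xs) :
  #|W (tanner_adj (dyadicD xs))| = (2 * (2 ^ l * #|Rset xs|))%N.
Proof.
rewrite -(cardsID (Lset l)) card_Wcheck // mul2n -addnn; congr (_ + _)%N.
have -> : W (tanner_adj (dyadicD xs)) :\: Lset l
   = @swf l @: (W (tanner_adj (dyadicD xs)) :&: Lset l).
  apply/setP=> q; apply/idP/imsetP.
    rewrite !inE => /andP[nl qW]; exists (swf q); last by rewrite swfK.
    rewrite inE swf_W; last by rewrite inE.
    by rewrite /= inE /swf ffunE; move: nl; case: (q o0).
  case=> p; rewrite inE => /andP[pW pl] ->.
  rewrite inE (swf_W pW) andbT inE /swf ffunE.
  by move: pl; rewrite inE; case: (p o0).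
by rewrite card_imset ?card_Wcheck //; apply: (can_inj (@swfK l)).
Qed.

Lemma cardR (l w : nat) (xs : 'I_w -> 'rV['F_2]_l) :
  #|Rset xs| = (#|Rcset xs| + #|Rncset xs|)%N.
Proof.
rewrite -(cardsID (Rcset xs) (Rset xs)) /Rncset.
have -> : Rset xs :&: Rcset xs = Rcset xs.
  by apply/setIidPr; apply/subsetP=> q; rewrite inE => /andP[].
by [].
Qed.

Unset Implicit Arguments.
Theorem mainTheorem5 (l w : nat) (xs : 'I_w -> 'rV['F_2]_l) :
  (1 <= l)%N -> injective xs ->
  ((num_cycles (tanner_adj (dyadicD xs)) 4)%:R : rat)
    = (2 ^ l)%:R / 4 * (#|Rcset xs| + #|Rncset xs|)%:R
  /\ ((2 <= w)%N -> girth_is (tanner_adj (dyadicD xs)) 4).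
Proof.
move=> _ ixs; split.
  have := cardW (@tsym l w xs); rewrite card_W // cardR => h.
  have h' : ((num_cycles (tanner_adj (dyadicD xs)) 4)%:R : rat) * 8
           = 2 * (2 ^ l)%:R * (#|Rcset xs| + #|Rncset xs|)%:R.
    by rewrite -!natrM mulnC -h mulnA.
  have -> : ((num_cycles (tanner_adj (dyadicD xs)) 4)%:R : rat)
           = (num_cycles (tanner_adj (dyadicD xs)) 4)%:R * 8 / 8.
    by rewrite mulfK.
  by rewrite h'; field.
move=> w2; split.
  have w0 : (0 < w)%N by apply: leq_trans w2.
  pose u0 : 'I_w := Ordinal w0; pose u1 : 'I_w := Ordinal w2.
  exists (phi xs 0 ((u0, u1), (u1, u0))).
  have : ((u0, u1), (u1, u0)) \in Rset xs by rewrite !inE /= addrC eqxx.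
  by move/(phi_in ixs 0); rewrite inE.
move=> k; case: k => [|[|[|[|k]]]] // _ p; apply/negP.
- case/and4P=> _ _ /forallP /(_ ord0) + _.
  have -> : ordS (ord0 : 'I_1) = ord0 by apply: val_inj.
  by case: (p ord0).
- case/and4P=> _ _ _ /injectiveP ie.
  have h1 : ordS (ord0 : 'I_2) = 1 by apply: val_inj.
  have h2 : ordS (1 : 'I_2) = ord0 by apply: val_inj.
  have := ie ord0 1; rewrite h1 h2 setUC => /(_ erefl) /(congr1 val).
  by [].
- case/and4P=> _ _ /forallP e _.
  have := e ord0; have := e 1; have := e 2.
  have h1 : ordS (ord0 : 'I_3) = 1 by apply: val_inj.
  have h2 : ordS (1 : 'I_3) = 2 by apply: val_inj.
  have h3 : ordS (2 : 'I_3) = ord0 by apply: val_inj.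
  rewrite h1 h2 h3.
  by case: (p ord0); case: (p 1); case: (p 2).
Qed.
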